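(* Let $a_1,\dots,a_n$ be real numbers with $n=k\ell$ odd (for positive integers $k,\ell$). Let $\Pi$ be the set of all partitions $\pi=\{S_1,\dots,S_\ell\}$ of $[n]$ into $\ell$ blocks each of size $k$. Then \[ \operatorname{median}_{\pi\in\Pi}\ \operatorname{median}_{b\in[\ell]}\ \operatorname{median}_{i\in S_b} a_i=\operatorname{median}_{i\in[n]} a_i . \]
   Context: The median of a finite list of odd length is its middle element after sorting; the median of a list of even length (which may occur for the outer median over $\Pi$) is the average of its two middle elements. The outer median is taken over the list of values, one for each partition $\pi\in\Pi$. *)

(* Defs.v *)
From HB Require Import structures.
From mathcomp Require Import all_boot all_order all_algebra.
Set Implicit Arguments. Unset Strict Implicit. Unset Printing Implicit Defensive.
Import Order.TTheory GRing.Theory Num.Theory.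
Local Open Scope ring_scope.

(* Median of a finite list: middle element of the sorted list for odd length,
   average of the two middle elements for even length (0 for the empty list,
   a case that never arises in the statement). *)
Definition median (R : realFieldType) (s : seq R) : R :=
  let t := sort <=%R s in
  let m := size t in
  if odd m then nth 0 t m./2
  else (nth 0 t m./2.-1 + nth 0 t m./2) / 2%:R.

Definition is_equipartition (n k l : nat) (P : {set {set 'I_n}}) : bool :=
  [&& partition P [set: 'I_n], (#|P| == l)%N & [forall B in P, (#|B| == k)%N]].

Definition equipartitions (n k l : nat) : seq {set {set 'I_n}} :=
  enum (is_equipartition k l).

Definition med_med (R : realFieldType) (n : nat) (a : 'I_n -> R)
    (P : {set {set 'I_n}}) : R :=
  median [seq median [seq a i | i <- enum (pred_of_set B)] | B : {set 'I_n} <- enum (pred_of_set P)].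

(* Main.v *)
Require Import Defs.
From HB Require Import structures.
From mathcomp Require Import all_boot all_order all_algebra.
From mathcomp Require Import fingroup perm zify ring lra.
Set Implicit Arguments. Unset Strict Implicit. Unset Printing Implicit Defensive.
Import Order.TTheory GRing.Theory Num.Theory.
Local Open Scope ring_scope.


Ltac cnt_tac x t c1 c2 E :=
  let A := fresh "A" in let B := fresh "B" in
  set A := count (fun y => (y < x)%R) t in c1 c2 |- *;
  set B := count (fun y => (x < y)%R) t in c1 c2 |- *;
  let S := fresh "S" in set S := size t in c1 c2 E |- *;
  clearbody A B S; lia.

Section Med.
Variable R : realFieldType.
Implicit Types s t : seq R.

Lemma sortR_sorted s : sorted <=%R (sort <=%R s).
Proof. exact: (sort_sorted (@le_total _ R)). Qed.

Lemma perm_sortR s : perm_eq (sort <=%R s) s.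
Proof. by rewrite perm_sort. Qed.

Lemma sorted_nth_le t i j : sorted <=%R t -> (i <= j)%N -> (j < size t)%N ->
  nth 0 t i <= nth 0 t j.
Proof.
move=> st ij js; apply: (sorted_leq_nth (@le_trans _ R) (@lexx _ R)) => //.
by rewrite inE (leq_ltn_trans ij js).
Qed.

Lemma med_nth_eq t (x : R) j : sorted <=%R t ->
  (count (fun y : R => (y < x)%R) t <= j)%N -> (j < size t - count (fun y : R => (x < y)%R) t)%N ->
  nth 0 t j = x.
Proof.
move=> st c1 c2.
have js : (j < size t)%N by lia.
case: (ltgtP (nth 0 t j) x) => // H.
- have : (j.+1 <= count (fun y : R => (y < x)%R) t)%N.
    rewrite -[t](cat_take_drop j.+1) count_cat.
    have -> : count (fun y : R => (y < x)%R) (take j.+1 t) = j.+1.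
      have sz : size (take j.+1 t) = j.+1 by rewrite size_takel.
      rewrite -{2}sz; apply/eqP; rewrite -all_count; apply/all_nthP => i.
      rewrite sz => ii; rewrite nth_take //.
      by apply: le_lt_trans H; apply: sorted_nth_le.
    exact: leq_addr.
  lia.
- have : (size t - j <= count (fun y : R => (x < y)%R) t)%N.
    rewrite -[X in (_ <= count _ X)%N](cat_take_drop j t) count_cat.
    have -> : count (fun y : R => (x < y)%R) (drop j t) = (size t - j)%N.
      have sz : size (drop j t) = (size t - j)%N by rewrite size_drop.
      rewrite -sz; apply/eqP; rewrite -all_count; apply/all_nthP => i.
      rewrite sz => ii; rewrite nth_drop //.
      by apply: lt_le_trans H _; apply: sorted_nth_le => //; lia.
    exact: leq_addl.
  lia.
Qed.

Lemma med_char s (x : R) : (2 * count (fun y : R => (y < x)%R) s < size s)%N ->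
  (2 * count (fun y : R => (x < y)%R) s < size s)%N -> median s = x.
Proof.
rewrite /median; set t := sort _ _.
have pt : perm_eq t s by apply: perm_sortR.
have st : sorted <=%R t by apply: sortR_sorted.
rewrite -(perm_size pt) -!(seq.permP pt) => c1 c2.
clearbody t.
have := odd_double_half (size t); rewrite -muln2.
move: ((size t)./2) => h E.
case: ifP => od; rewrite od /= in E.
  apply: med_nth_eq => //; cnt_tac x t c1 c2 E.
rewrite (@med_nth_eq t x h.-1) ?(@med_nth_eq t x h) //; try cnt_tac x t c1 c2 E.
by lra.
Qed.

Lemma med_spec s : odd (size s) ->
  (2 * count (fun y : R => (y < median s)%R) s < size s)%N /\
  (2 * count (fun y : R => (median s < y)%R) s < size s)%N.
Proof.
rewrite /median; set t := sort _ _.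
have pt : perm_eq t s by apply: perm_sortR.
have st : sorted <=%R t by apply: sortR_sorted.
rewrite -(perm_size pt) -!(seq.permP pt) => od; rewrite od.
clearbody t.
move: od; move Es: (size t) => S od.
have := odd_double_half S; rewrite -muln2 od /=.
move: (S./2) => h E.
have hS : (h < S)%N by lia.
have hS' : size (take h.+1 t) = h.+1 by rewrite size_takel // Es.
set x := nth 0 t h.
split.
  rewrite -[X in count _ X](cat_take_drop h t) count_cat.
  have -> : count (fun y : R => (y < x)%R) (drop h t) = 0%N.
    apply/eqP; rewrite -leqn0 leqNgt -has_count; apply/hasPn => y.
    move/(nthP 0) => [i ii <-]; rewrite nth_drop -leNgt.
    rewrite size_drop Es in ii; apply: sorted_nth_le => //; rewrite ?Es; lia.
  have := count_size (fun y : R => (y < x)%R) (take h t); rewrite size_take Es hS.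
  lia.
rewrite -[X in count _ X](cat_take_drop h.+1 t) count_cat.
have -> : count (fun y : R => (x < y)%R) (take h.+1 t) = 0%N.
  apply/eqP; rewrite -leqn0 leqNgt -has_count; apply/hasPn => y.
  move/(nthP 0) => [i ii <-]; rewrite hS' in ii.
  rewrite nth_take -?leNgt; last lia.
  by apply: sorted_nth_le => //; rewrite ?Es; lia.
have := count_size (fun y : R => (x < y)%R) (drop h.+1 t); rewrite size_drop Es.
set c := count _ (drop _ _); clearbody c; lia.
Qed.

Lemma med_mem s : odd (size s) -> median s \in s.
Proof.
rewrite /median size_sort => od; rewrite od.
rewrite -(mem_sort <=%R); apply: mem_nth; rewrite size_sort.
move: od; move: (size s) => S od.
have := odd_double_half S; rewrite -muln2 od /=; lia.
Qed.

Lemma med_perm s1 s2 : perm_eq s1 s2 -> median s1 = median s2.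
Proof.
move=> p; rewrite /median.
by rewrite (perm_sortP (@le_total _ R) (@le_trans _ R) (@le_anti _ R) _ _ p).
Qed.

End Med.


Lemma count_le_in (T : eqType) (p q : pred T) (s : seq T) :
  {in s, forall x, p x -> q x} -> (count p s <= count q s)%N.
Proof.
elim: s => //= x s IH H.
rewrite leq_add ?IH //; last by move=> y ys; apply: H; rewrite inE ys orbT.
by case: (p x) (H x (mem_head _ _)) => // ->.
Qed.

Section MedMap.
Variable R : realFieldType.
Implicit Types s : seq R.

Lemma med_map_mono s (f : R -> R) : odd (size s) ->
  {in s &, forall x y, x <= y -> f x <= f y} -> median (map f s) = f (median s).
Proof.
move=> od fm; have [c1 c2] := med_spec od; have ms := med_mem od.
apply: med_char; rewrite size_map count_map.
  apply: leq_ltn_trans c1; rewrite leq_mul2l; apply/orP; right.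
  apply: count_le_in => x xs /=; apply: contraTT; rewrite -!leNgt; exact: fm.
apply: leq_ltn_trans c2; rewrite leq_mul2l; apply/orP; right.
apply: count_le_in => x xs /=; apply: contraTT; rewrite -!leNgt; exact: fm.
Qed.

Lemma med_map_anti s (f : R -> R) : odd (size s) ->
  {in s &, forall x y, x <= y -> f y <= f x} -> median (map f s) = f (median s).
Proof.
move=> od fm; have [c1 c2] := med_spec od; have ms := med_mem od.
apply: med_char; rewrite size_map count_map.
  apply: leq_ltn_trans c2; rewrite leq_mul2l; apply/orP; right.
  apply: count_le_in => x xs /=; apply: contraTT; rewrite -!leNgt; exact: fm.
apply: leq_ltn_trans c1; rewrite leq_mul2l; apply/orP; right.
apply: count_le_in => x xs /=; apply: contraTT; rewrite -!leNgt; exact: fm.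
Qed.

End MedMap.

Lemma enum_imset_perm (T1 T2 : finType) (f : T1 -> T2) (A : {set T1}) :
  injective f -> perm_eq (enum (f @: A)) (map f (enum A)).
Proof.
move=> fi; apply: uniq_perm.
- exact: enum_uniq.
- by rewrite (map_inj_uniq fi) enum_uniq.
move=> y; rewrite mem_enum; apply/imsetP/mapP => [[x xA ->]|[x xA ->]].
  by exists x; rewrite // mem_enum.
by exists x; rewrite // -mem_enum.
Qed.

Section Relabel.
Variables (R : realFieldType) (n k l : nat).
Local Notation T := {set {set 'I_n}}.

Definition Tact (s : {perm 'I_n}) (P : T) : T := [set s @: (B : {set 'I_n}) | B in P].

Lemma Tact_K s P : Tact s (Tact (s^-1)%g P) = P.
Proof.
rewrite /Tact -imset_comp -[RHS]imset_id; apply: eq_imset => B /=.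
rewrite -imset_comp -[RHS]imset_id; apply: eq_imset => x /=.
by rewrite permKV.
Qed.

Lemma Tact_inj s : injective (Tact s).
Proof.
apply: (can_inj (g := Tact (s^-1)%g)) => P.
by have := Tact_K (s^-1)%g P; rewrite invgK.
Qed.

Lemma mm_relabel s (w : 'I_n -> R) P :
  med_med w (Tact s P) = med_med (fun i => w (s i)) P.
Proof.
rewrite /med_med.
rewrite (med_perm (perm_map _ (enum_imset_perm _ (imset_inj (@perm_inj _ s))))).
rewrite -map_comp; congr median; apply: eq_map => B /=.
apply: med_perm.
by have := perm_map w (enum_imset_perm B (@perm_inj _ s)); rewrite -map_comp.
Qed.

Lemma imset_permT (s : {perm 'I_n}) : s @: [set: 'I_n] = [set: 'I_n].
Proof.
apply/setP => x; rewrite inE; apply/imsetP; exists ((s^-1)%g x); rewrite ?inE //.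
by rewrite permKV.
Qed.

Lemma equi_relabel s P : is_equipartition k l P -> is_equipartition k l (Tact s P).
Proof.
case/and3P => pP cP bP; apply/and3P; split.
- by rewrite -(imset_permT s) /Tact imset_partition //; exact: perm_inj.
- by rewrite card_imset //; apply: imset_inj; exact: perm_inj.
apply/forall_inP => B' /imsetP [B BP ->].
by rewrite card_imset; [exact: (forall_inP bP) | exact: perm_inj].
Qed.

Lemma count_relabel (s : {perm 'I_n}) (p : pred R) (w : 'I_n -> R) :
  count (fun P => p (med_med w P)) (equipartitions n k l) =
  count (fun P => p (med_med (fun i => w (s i)) P)) (equipartitions n k l).
Proof.
rewrite -(eq_count (fun P => congr1 p (mm_relabel s w P))).
rewrite -[in RHS](count_map (Tact s) (fun P => p (med_med w P))).
suff /seq.permP -> : perm_eq (equipartitions n k l) (map (Tact s) (equipartitions n k l)) by [].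
apply: uniq_perm.
- exact: enum_uniq.
- by rewrite (map_inj_uniq (@Tact_inj s)) enum_uniq.
move=> Q; rewrite mem_enum; apply/idP/mapP => [QL|[P PL ->]].
  exists (Tact (s^-1)%g Q); last by rewrite Tact_K.
  by rewrite mem_enum; apply: equi_relabel.
by apply: equi_relabel; rewrite mem_enum in PL.
Qed.

End Relabel.


Lemma med_iota (R : realFieldType) m : odd m ->
  median [seq (j%:R : R) | j <- iota 0 m] = (m./2)%:R.
Proof.
move=> od; rewrite /median sorted_sort; last first.
  by apply: (homo_sorted (e := leq)) (iota_sorted 0 m) => x y; rewrite ler_nat.
  exact: le_trans.
rewrite size_map size_iota od.
have hm : (m./2 < m)%N.
  by have := odd_double_half m; rewrite od -muln2; lia.
by rewrite (nth_map 0%N) ?size_iota // nth_iota.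
Qed.

Section Interval.
Variables (k l : nat).
Hypotheses (hk : (0 < k)%N) (hl : (0 < l)%N).
Local Notation n := (k * l)%N.

Definition blk (q : nat) : {set 'I_n} := [set i : 'I_n | (i %/ k == q)%N].

Lemma blk_vals (q : nat) : (q < l)%N ->
  perm_eq (map val (enum (blk q))) (iota (q * k) k).
Proof.
move=> ql; apply: uniq_perm.
- by rewrite (map_inj_uniq val_inj) enum_uniq.
- exact: iota_uniq.
move=> x; rewrite mem_iota; apply/mapP/idP => [[i]|H].
  rewrite mem_enum inE => /eqP Hq Hx; subst x q.
  apply/andP; split; first by rewrite leq_trunc_div.
  by rewrite -mulSnr ltn_ceil.
have xn : (x < n)%N.
  have : (x < q * k + k)%N by case/andP: H.
  move=> h; apply: (leq_trans h); rewrite -mulSnr mulnC leq_mul2l ql orbT //.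
exists (Ordinal xn) => //; rewrite mem_enum inE /=.
case/andP: H => H1 H2; apply/eqP.
apply/eqP; rewrite eqn_leq; apply/andP; split.
  by rewrite -ltnS ltn_divLR // mulSnr.
by rewrite leq_divRL.
Qed.

Lemma card_blk q : (q < l)%N -> #|blk q| = k.
Proof.
by move=> ql; rewrite cardE -(size_map val) (perm_size (blk_vals ql)) size_iota.
Qed.

Definition blkI (q : 'I_l) := blk q.

Definition P0 : {set {set 'I_n}} := [set blkI q | q in [set: 'I_l]].

Lemma P0_props : partition P0 (cover P0) /\ {in [set: 'I_l] &, injective blkI}.
Proof.
apply: indexed_partition.
  move=> i j _ _ ji; rewrite -setI_eq0; apply/eqP/setP => x.
  rewrite !inE; apply/negbTE; apply: contra ji => /andP [/eqP H1 /eqP H2].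
  by apply/eqP/val_inj; rewrite /= -H1 -H2.
move=> i _; rewrite -card_gt0 card_blk //.
Qed.

Lemma cover_P0 : cover P0 = [set: 'I_n].
Proof.
apply/setP => x; rewrite inE cover_imset; apply/bigcupP.
have xl : (x %/ k < l)%N by rewrite ltn_divLR //; have := ltn_ord x; move: (nat_of_ord x) => y; lia.
by exists (Ordinal xl); rewrite ?inE.
Qed.

Lemma P0_equi : is_equipartition k l P0.
Proof.
have [pP inj] := P0_props.
apply/and3P; split.
- by rewrite -cover_P0.
- by rewrite card_in_imset // cardsT card_ord.
apply/forall_inP => B /imsetP [q _ ->]; rewrite card_blk //.
Qed.

End Interval.

Lemma half_mul k l : odd k -> odd l -> ((k * l)./2 = l./2 * k + k./2)%N.
Proof.
move=> ok ol.
have ek := odd_double_half k; have el := odd_double_half l.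
rewrite ok ol /= -!muln2 in ek el.
move: (k./2) (l./2) ek el => a b ek el.
have -> : (k * l = true + (b * k + a).*2)%N.
  rewrite -muln2 /=; subst k l; nia.
by rewrite half_bit_double.
Qed.

Section IntervalMed.
Variables (R : realFieldType) (k l : nat).
Hypotheses (hk : (0 < k)%N) (hl : (0 < l)%N) (ok : odd k) (ol : odd l).
Local Notation n := (k * l)%N.

Lemma med_blk (q : nat) : (q < l)%N ->
  median [seq ((nat_of_ord i)%:R : R) | i <- enum (blk k l q)] = (q * k + k./2)%:R.
Proof.
move=> ql.
rewrite (map_comp (fun j : nat => (j%:R : R)) val).
rewrite (med_perm (perm_map _ (blk_vals hk ql))).
rewrite -[(q * k)%N]addn0 iotaDl -map_comp.
rewrite (_ : map _ (iota 0 k) = map (fun x => (q * k)%:R + x) (map (fun j : nat => (j%:R : R)) (iota 0 k))); last first.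
  by rewrite -map_comp; apply: eq_map => x /=; rewrite natrD.



rewrite med_map_mono ?size_map ?size_iota //; last by move=> x y _ _; rewrite lerD2l.
by rewrite med_iota // natrD addn0.
Qed.

Lemma mm_P0 : med_med (fun i : 'I_n => ((i : nat)%:R : R)) (@P0 k l) = (n./2)%:R.
Proof.
have [_ inj] := P0_props l hk.
have inj' : injective (blkI k (l:=l)) by move=> x y; apply: inj; rewrite inE.
rewrite /med_med /P0.
rewrite (med_perm (perm_map _ (enum_imset_perm _ inj'))) -map_comp.
have -> : [seq ((fun B : {set 'I_n} => median [seq ((nat_of_ord i)%:R : R) | i <- enum B]) \o
   blkI k (l:=l)) j | j <- enum [set: 'I_l]] =
   [seq x * k%:R + (k./2)%:R | x <- [seq (j%:R : R) | j <- iota 0 l]].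
  rewrite -val_enum_ord -!map_comp enum_setT; apply: eq_map => q /=.
  by rewrite /blkI med_blk // natrD natrM.
rewrite (med_map_mono (f := fun x : R => x * k%:R + (k./2)%:R)) ?size_map ?size_iota //; last first.
  by move=> x y _ _ xy; rewrite lerD2r ler_wpM2r.
by rewrite med_iota // -natrM -natrD half_mul.
Qed.

End IntervalMed.


Theorem lemma6p4 (R : realFieldType) (n k l : nat) (hk : (0 < k)%N) (hl : (0 < l)%N)
    (hn : n = (k * l)%N) (hodd : odd n) (a : 'I_n -> R) :
  median [seq med_med a P | P <- equipartitions n k l]
  = median [seq a i | i <- enum 'I_n].
Proof.
subst n.
have /andP [ok ol] : odd k && odd l by rewrite -oddM.
have n0 : (0 < k * l)%N by rewrite muln_gt0 hk hl.
pose i0 : 'I_(k * l) := Ordinal n0.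
pose s := sort (fun i j : 'I_(k * l) => a i <= a j) (enum 'I_(k * l)).
have ss : size s = (k * l)%N by rewrite size_sort size_enum_ord.
have us : uniq s by rewrite sort_uniq enum_uniq.
have sts : sorted (fun i j => a i <= a j) s.
  by apply: sort_sorted => x y; exact: le_total.
pose rf := fun j : 'I_(k * l) => nth i0 s j.
have rinj : injective rf.
  move=> x y /eqP; rewrite nth_uniq ?ss // => /eqP; exact: val_inj.
pose rho := perm rinj.
have rhoE : forall j, rho j = rf j by move=> j; rewrite permE.
have trA : transitive (fun i j : 'I_(k * l) => a i <= a j).
  by move=> y x z; apply: le_trans.
have reA : reflexive (fun i j : 'I_(k * l) => a i <= a j) by move=> x; exact: lexx.
pose b := fun i => a (rho i).
have bmono : forall i j : 'I_(k * l), (i <= j)%N -> b i <= b j.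
  move=> i j ij; rewrite /b !rhoE; apply: (sorted_leq_nth trA reA) => //;
  by rewrite inE ss.
pose c := fun i : 'I_(k * l) => ((nat_of_ord i)%:R : R).
pose f := fun x : R => if [pick i | c i == x] is Some i then b i else 0.
have fc : forall i, f (c i) = b i.
  move=> i; rewrite /f; case: pickP => [j /eqP H|H]; last by have := H i; rewrite eqxx.
  have -> // : j = i.
  by apply: val_inj; apply/eqP; move/eqP: H; rewrite /c eqr_nat.
have fmono : forall i j, c i <= c j -> f (c i) <= f (c j).
  by move=> i j; rewrite !fc /c ler_nat; apply: bmono.
have gen : forall r : seq 'I_(k * l), odd (size r) ->
    median [seq b i | i <- r] = f (median [seq c i | i <- r]) /\
    exists i, median [seq c i | i <- r] = c i.
  move=> r od.
  have od' : odd (size [seq c i | i <- r]) by rewrite size_map.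
  have := med_mem od' => /mapP [i _ Ei]; split; last by exists i.
  have -> : [seq b i | i <- r] = map f [seq c i | i <- r].
    by rewrite -map_comp; apply: eq_map => j /=; rewrite fc.
  rewrite med_map_mono //.
  by move=> x y /mapP [i1 _ ->] /mapP [j1 _ ->]; apply: fmono.
have outer : forall P, is_equipartition k l P ->
    med_med b P = f (med_med c P) /\ exists i, med_med c P = c i.
  move=> P /and3P [_ /eqP cP /forall_inP bP].
  have innerB : forall B, B \in enum P ->
      median [seq b i | i <- enum B] = f (median [seq c i | i <- enum B]) /\
      exists i, median [seq c i | i <- enum B] = c i.
    move=> B; rewrite mem_enum => BP; apply: gen.
    by rewrite -cardE (eqP (bP B BP)).
  rewrite /med_med.
  have -> : [seq median [seq b i | i <- enum B] | B : {set 'I_(k * l)} <- enum P] =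
            map f [seq median [seq c i | i <- enum B] | B : {set 'I_(k * l)} <- enum P].
    rewrite -map_comp; apply/eq_in_map => B BP /=.
    by case: (innerB B BP).
  have od : odd (size [seq median [seq c i | i <- enum B] | B : {set 'I_(k * l)} <- enum P]).
    by rewrite size_map -cardE cP.
  have := med_mem od => /mapP [B BP EB]; split.
    rewrite med_map_mono //.
    move=> x y /mapP [B1 B1P ->] /mapP [B2 B2P ->].
    have [_ [i1 ->]] := innerB B1 B1P; have [_ [i2 ->]] := innerB B2 B2P.
    exact: fmono.
  by rewrite EB; case: (innerB B BP).
have hN : ((k * l)./2 < k * l)%N.
  by have := odd_double_half (k * l); rewrite hodd -muln2; lia.
pose im : 'I_(k * l) := Ordinal hN.
pose cm := c im.
set m := median [seq a i | i <- enum 'I_(k * l)].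
have mE : m = f cm.
  have -> : m = median [seq b i | i <- enum 'I_(k * l)].
    apply: med_perm; rewrite /b (map_comp a rho); apply: perm_map.
    rewrite perm_sym; apply: uniq_perm.
    - by rewrite (map_inj_uniq (@perm_inj _ rho)) enum_uniq.
    - exact: enum_uniq.
    move=> x; rewrite mem_enum; apply/mapP; exists ((rho^-1)%g x).
      by rewrite mem_enum.
    by rewrite permKV.
  have odN : odd (size (enum 'I_(k * l))) by rewrite size_enum_ord.
  have [-> _] := gen _ odN.
  congr f.
  rewrite /cm /c /=.
  by rewrite (map_comp (fun j : nat => (j%:R : R)) val) val_enum_ord med_iota.
pose K : R := ((k * l).-1)%:R.
have KE : K = cm + cm.
  rewrite /K /cm /c /= -natrD; congr (_%:R).
  have := odd_double_half (k * l); rewrite hodd /= -muln2.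
  move: ((k * l)./2) (k * l) => h N; lia.
pose tau := perm (@rev_ord_inj (k * l)).
have cT : forall i, c (tau i) = K - c i.
  move=> i; rewrite permE /c /K /= -natrB; last by have := ltn_ord i; move: (nat_of_ord i) => j; lia.
  by congr (_%:R); have := ltn_ord i; move: (nat_of_ord i) => j; lia.
have antiK : {in predT &, forall x y : R, x <= y -> K - y <= K - x}.
  by move=> x y _ _ xy; rewrite lerD2l lerN2.
have mmT : forall P, is_equipartition k l P -> med_med (fun i => c (tau i)) P = K - med_med c P.
  move=> P /and3P [_ /eqP cP /forall_inP bP]; rewrite /med_med.
  have -> : [seq median [seq c (tau i) | i <- enum B] | B : {set 'I_(k * l)} <- enum P] =
     map (fun x => K - x) [seq median [seq c i | i <- enum B] | B : {set 'I_(k * l)} <- enum P].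
    rewrite -map_comp; apply/eq_in_map => B; rewrite mem_enum => BP /=.
    rewrite (eq_map cT) (map_comp (fun x => K - x) c) med_map_anti //.
      by rewrite size_map -cardE (eqP (bP B BP)).
    by move=> x y _ _; apply: antiK.
  rewrite med_map_anti //; first by rewrite size_map -cardE cP.
  by move=> x y _ _; apply: antiK.
pose L := equipartitions (k * l) k l.
pose A := count (fun P => med_med c P < cm) L.
pose Bc := count (fun P => cm < med_med c P) L.
pose E := count (fun P => med_med c P == cm) L.
have sym : A = Bc.
  rewrite /A (count_relabel k l tau (fun y => y < cm) c).
  apply: eq_in_count => P; rewrite mem_enum => PL /=.
  rewrite mmT // KE; apply/idP/idP => H; lra.
have lt_m : (count (fun P => (med_med a P < m)%R) L <= A)%N.
  rewrite (count_relabel k l rho (fun y => y < m) a).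
  apply: count_le_in => P; rewrite mem_enum => PL /=.
  have [-> [i ->]] := outer P PL.
  rewrite mE; apply: contraTT; rewrite -!leNgt /cm => H; exact: fmono.
have gt_m : (count (fun P => (m < med_med a P)%R) L <= Bc)%N.
  rewrite (count_relabel k l rho (fun y => m < y) a).
  apply: count_le_in => P; rewrite mem_enum => PL /=.
  have [-> [i ->]] := outer P PL.
  rewrite mE; apply: contraTT; rewrite -!leNgt /cm => H; exact: fmono.
have E1 : (0 < E)%N.
  rewrite /E -has_count; apply/hasP; exists (P0 k l).
    by rewrite mem_enum; apply: P0_equi.
  by rewrite /c mm_P0.
have tot : (A + Bc + E = size L)%N.
  rewrite /A /Bc /E -(count_predC (fun P => med_med c P < cm)) -addnA.
  congr (_ + _)%N; rewrite -count_predUI.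
  rewrite (eq_count (a2 := pred0) (a1 := predI _ _)) ?count_pred0 ?addn0; last first.
    move=> P /=; apply/negbTE/negP => /andP [h1 /eqP h2]; by rewrite h2 ltxx in h1.
  apply: eq_count => P /=; by rewrite -leNgt le_eqVlt eq_sym orbC.
have lt2 : (2 * A < size L)%N.
  move: sym tot E1; clear lt_m gt_m; move: (size L) A Bc E => S x y z; lia.
apply: med_char; rewrite size_map !count_map.
  by apply: leq_ltn_trans lt2; rewrite leq_mul2l lt_m orbT.
by apply: leq_ltn_trans lt2; rewrite leq_mul2l sym gt_m orbT.
Qed.
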